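(* Let $\sqrt{2} = (1.b_1 b_2 b_3 \cdots)_2$ be the binary expansion of $\sqrt 2$. For integers $n \geq 2$, let $L_n(x) = \left\lfloor \frac{x(2^n - x)}{2^{n-2}} \right\rfloor$ for $x \in X_n = \{1, 2, \dots, 2^n - 1\}$, and call $n$ undesirable if there exists $x \in X_n$ with $L_n(x) = 2^{n-1}$. Then an integer $n \geq 2$ is undesirable if $$(0.b_{n-1} b_n b_{n+1} \cdots)_2 \leq (0.01 b_1 b_2 b_3 \cdots)_2 .$$
   Context: $(0.c_1c_2c_3\cdots)_2$ denotes the real number $\sum_{j \ge 1} c_j 2^{-j}$. *)

(* Defs.v *)
From Stdlib Require Import Reals ZArith Arith.
From Coquelicot Require Import Coquelicot.
Open Scope R_scope.

(* (0.c_1 c_2 c_3 ...)_2 = sum_{j >= 1} c_j 2^{-j}  (digits c_j, j >= 1) *)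
Definition binval (c : nat -> nat) : R :=
  Series (fun k => INR (c (S k)) / 2 ^ (S k)).

Definition Ln (n : nat) (x : Z) : Z :=
  Z.div (x * (2 ^ Z.of_nat n - x)) (2 ^ Z.of_nat (n - 2)).

Definition undesirable (n : nat) : Prop :=
  exists x : Z, (1 <= x <= 2 ^ Z.of_nat n - 1)%Z /\
                Ln n x = (2 ^ Z.of_nat (n - 1))%Z.

(* digit sequence of (0.b_{n-1} b_n b_{n+1} ...)_2 : j-th digit is b_{n-2+j} *)
Definition tail_digits (b : nat -> nat) (n : nat) : nat -> nat :=
  fun j => b (n - 2 + j)%nat.

(* digit sequence of (0.0 1 b_1 b_2 ...)_2 *)
Definition shifted_digits (b : nat -> nat) : nat -> nat :=
  fun j => match j with
           | 0%nat | 1%nat => 0%nat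
           | 2%nat => 1%nat
           | S (S k) => b k
           end.

(* Main.v *)
Require Import Defs.
From Stdlib Require Import Reals ZArith Arith Lra Lia Psatz.
From Coquelicot Require Import Coquelicot.
Open Scope R_scope.

Lemma ex_dig (d : nat -> nat) : (forall k, (d (S k) <= 1)%nat) ->
  ex_series (fun k => INR (d (S k)) / 2 ^ (S k)).
Proof.
  intros H.
  apply (@ex_series_le R_AbsRing R_CompleteNormedModule _ (fun k => (/2) ^ k)).
  - intros k. change (norm (INR (d (S k)) / 2 ^ S k)) with (Rabs (INR (d (S k)) / 2 ^ S k)).
    assert (H1 : INR (d (S k)) <= 1) by (apply (le_INR _ 1); apply H).
    assert (H0 : 0 <= INR (d (S k))) by apply pos_INR.
    assert (Hp : 0 < 2 ^ k) by (apply pow_lt; lra).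
    rewrite Rabs_pos_eq.
    + rewrite pow_inv. simpl. unfold Rdiv.
      rewrite Rinv_mult.
      assert (0 < / 2 ^ k) by (apply Rinv_0_lt_compat; lra).
      nra.
    + apply Rmult_le_pos; [lra|]. apply Rlt_le, Rinv_0_lt_compat, pow_lt; lra.
  - apply ex_series_geom. rewrite Rabs_pos_eq; lra.
Qed.

Lemma dig_ge0 (d : nat -> nat) : (forall k, (d (S k) <= 1)%nat) ->
  0 <= Series (fun k => INR (d (S k)) / 2 ^ (S k)).
Proof.
  intros H.
  assert (Z0 : Series (fun _ : nat => 0) = 0).
  { transitivity (Series (fun n : nat => 0 * 0)).
    - apply Series_ext; intros; ring.
    - rewrite Series_scal_l. ring. }
  rewrite <- Z0.
  apply Series_le; [|apply ex_dig; auto].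
  intros k; split; [lra|].
  apply Rmult_le_pos; [apply pos_INR|]. apply Rlt_le, Rinv_0_lt_compat, pow_lt; lra.
Qed.

Theorem lemma2p3 (b : nat -> nat)
  (hb01 : forall j, (1 <= j)%nat -> (b j <= 1)%nat)
  (hsqrt2 : sqrt 2 = 1 + binval b)
  (n : nat) (hn : (2 <= n)%nat)
  (hcond : binval (tail_digits b n) <= binval (shifted_digits b)) :
  undesirable n.
Proof.
  set (a := fun k => INR (b (S k)) / 2 ^ (S k)).
  assert (Ha : ex_series a) by (apply ex_dig; intros; apply hb01; lia).
  assert (claim : forall p, exists z : Z,
    2 ^ p * Series a = IZR z + 2 ^ p * Series (fun k => a (p + k)%nat)).
  { induction p as [|p [z Hz]].
    - exists 0%Z. simpl. rewrite Rplus_0_l. f_equal.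
    - exists (2 * z + Z.of_nat (b (S p)))%Z.
      assert (Hs : ex_series (fun k => a (p + k)%nat)) by (apply ex_series_incr_n; exact Ha).
      rewrite (Series_incr_1 _ Hs) in Hz.
      assert (E : Series (fun k => a (p + S k)%nat) = Series (fun k => a (S p + k)%nat)).
      { apply Series_ext; intros k; f_equal; lia. }
      rewrite E in Hz.
      assert (E2 : 2 ^ p * a (p + 0)%nat = INR (b (S p)) / 2).
      { unfold a. rewrite Nat.add_0_r. simpl. field. apply pow_nonzero; lra. }
      rewrite plus_IZR, mult_IZR, <- INR_IZR_INZ.
      simpl (2 ^ S p). 
      replace (2 * 2 ^ p * Series a) with (2 * (2 ^ p * Series a)) by ring.
      rewrite Hz, (Rmult_plus_distr_l (2 ^ p)), E2. field. }
  destruct n as [|[|p]]; try lia.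
  destruct (claim p) as [z Hz].
  assert (Ht : binval (tail_digits b (S (S p))) = 2 ^ p * Series (fun k => a (p + k)%nat)).
  { unfold binval, tail_digits. rewrite <- Series_scal_l. apply Series_ext; intros k.
    unfold a. replace (S (S p) - 2 + S k)%nat with (S (p + k)) by lia.
    rewrite <- Nat.add_succ_r.
    replace (2 ^ (p + S k)) with (2 ^ p * 2 ^ S k) by (rewrite pow_add; reflexivity). field.
    split; apply pow_nonzero; lra. }
  assert (Hsh : binval (shifted_digits b) = / 4 * sqrt 2).
  { unfold binval.
    set (c := fun k => INR (shifted_digits b (S k)) / 2 ^ S k).
    assert (Hc : ex_series c).
    { apply ex_dig. intros [|[|k]]; simpl; auto. apply hb01; lia. }
    rewrite (Series_incr_1 _ Hc).
    rewrite (Series_incr_1 _ (proj1 (ex_series_incr_1 _) Hc)).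
    assert (E : Series (fun k => c (S (S k))) = Series (fun k => / 4 * a k)).
    { apply Series_ext; intros k. unfold c, a. simpl. field. apply pow_nonzero; lra. }
    rewrite E, Series_scal_l. unfold c. simpl.
    rewrite hsqrt2. unfold binval. fold a. field. }
  set (f := binval (tail_digits b (S (S p)))).
  assert (Hf0 : 0 <= f).
  { unfold f, binval. apply dig_ge0. intros k. unfold tail_digits. apply hb01; lia. }
  set (s := sqrt 2).
  assert (Hss : s * s = 2) by (apply sqrt_sqrt; lra).
  assert (Hs0 : 0 < s) by (apply sqrt_lt_R0; lra).
  set (m := (2 ^ Z.of_nat p)%Z).
  assert (Hm : IZR m = 2 ^ p) by (unfold m; rewrite <- pow_IZR; reflexivity).
  set (y := (m + z)%Z).
  assert (Hy : IZR y = IZR m * s - f).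
  { unfold y. rewrite plus_IZR, Hm. unfold f. rewrite Ht. unfold s. rewrite hsqrt2.
    unfold binval. fold a. rewrite Rmult_plus_distr_l, Hz. ring. }
  assert (Hm1 : 1 <= IZR m) by (rewrite Hm; apply pow_R1_Rle; lra).
  rewrite Hsh in hcond. change (f <= / 4 * s) in hcond. assert (Hfle : f <= s / 4) by lra.
  assert (R1 : IZR y * IZR y <= 2 * (IZR m * IZR m)).
  { rewrite Hy.
    assert (h1 : f <= 2 * IZR m * s) by nra.
    assert (h2 : 0 <= f * (2 * IZR m * s - f)) by (apply Rmult_le_pos; lra).
    replace (2 * (IZR m * IZR m)) with (IZR m * IZR m * (s * s)) by (rewrite Hss; ring).
    nra. }
  assert (R2 : 2 * (IZR m * IZR m) - IZR m < IZR y * IZR y).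
  { rewrite Hy.
    assert (2 * IZR m * s * f <= IZR m).
    { assert (IZR m * s * f <= IZR m * s * (s / 4)) by (apply Rmult_le_compat_l; nra).
      nra. }
    replace (2 * (IZR m * IZR m)) with (IZR m * IZR m * (s * s)) by (rewrite Hss; ring).
    destruct (Req_dec f 0) as [e|e].
    - rewrite e. nra.
    - assert (0 < f * f) by nra. nra. }
  rewrite <- !mult_IZR in R1, R2.
  assert (Z1 : (y * y <= 2 * (m * m))%Z).
  { apply le_IZR. rewrite !mult_IZR in *. simpl (IZR 2). lra. }
  assert (Z2 : (2 * (m * m) - m < y * y)%Z).
  { apply lt_IZR. rewrite minus_IZR, !mult_IZR in *. simpl (IZR 2). lra. }
  assert (Hm1Z : (1 <= m)%Z) by (apply le_IZR; lra).
  exists (2 * m - y)%Z.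
  assert (EN : (2 ^ Z.of_nat (S (S p)) = 4 * m)%Z).
  { unfold m. rewrite !Nat2Z.inj_succ, !Z.pow_succ_r by lia. ring. }
  assert (EN2 : (2 ^ Z.of_nat (S (S p) - 2) = m)%Z) by (unfold m; f_equal; f_equal; lia).
  assert (EN1 : (2 ^ Z.of_nat (S (S p) - 1) = 2 * m)%Z).
  { unfold m. replace (S (S p) - 1)%nat with (S p) by lia.
    rewrite Nat2Z.inj_succ, Z.pow_succ_r by lia. ring. }
  rewrite EN. split; [nia|].
  unfold Ln. rewrite EN, EN2, EN1.
  symmetry. apply (Z.div_unique_pos _ _ _ (2 * (m * m) - y * y)); nia.
Qed.
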